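(* Let $\gamma\in(0,1)$ and $c\ge0$. Define the deterministic sequence $\bar v^0=0$ and, for $n\ge1$, $\bar v^n=(1-\tfrac1n)\bar v^{n-1}+\tfrac1n(c+\gamma\bar v^{n-1})$. Extend it to real arguments $x\ge0$ by linear interpolation: $\bar v(x)=\bar v^{\lfloor x\rfloor}+(x-\lfloor x\rfloor)(\bar v^{\lceil x\rceil}-\bar v^{\lfloor x\rfloor})$. Fix any real $n_0>0$ and let $$b=n_0^{1-\gamma}\Big[1-\frac{1-\gamma}{n_0\gamma}-\frac{1-\gamma}{c}\,\bar v(n_0)\Big].$$ Then for all real $n\ge n_0$, $$\bar v(n)\ \le\ \frac{c}{1-\gamma}\Big[1-b\,n^{-(1-\gamma)}-\frac{1-\gamma}{\gamma}\cdot\frac1n\Big].$$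
   Context: This concerns approximate value iteration with stepsize $1/n$ for a single-state, single-action problem with deterministic reward $c$ and discount factor $\gamma$. *)

(* Defs.v *)
From Stdlib Require Import Reals Lra.
Open Scope R_scope.

Fixpoint vbar_seq (gamma c : R) (n : nat) : R :=
  match n with
  | O => 0
  | S k => (1 - / INR (S k)) * vbar_seq gamma c k
           + / INR (S k) * (c + gamma * vbar_seq gamma c k)
  end.

Definition rfloor (x : R) : Z := Int_part x.   (* Int_part x = up x - 1 = floor x *)
Definition rceil (x : R) : Z := (- Int_part (- x))%Z.

Definition vbar (gamma c x : R) : R :=
  let lo := vbar_seq gamma c (Z.to_nat (rfloor x)) in
  let hi := vbar_seq gamma c (Z.to_nat (rceil x)) in
  lo + (x - IZR (rfloor x)) * (hi - lo).

Definition bconst (gamma c n0 : R) : R :=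
  Rpower n0 (1 - gamma) *
  (1 - (1 - gamma) / (n0 * gamma) - (1 - gamma) / c * vbar gamma c n0).

(* Main.v *)
Require Import Defs.
From Stdlib Require Import Reals Lra Lia ZArith.
Open Scope R_scope.

Fixpoint wseq (a : R) (k : nat) : R :=
  match k with
  | O => 1
  | S j => (1 - a / INR (S j)) * wseq a j
  end.

Lemma v_w (gamma c : R) (k : nat) : 0 < gamma < 1 ->
  vbar_seq gamma c k = c / (1 - gamma) * (1 - wseq (1 - gamma) k).
Proof.
  intros Hg. induction k as [|k IH].
  - simpl. field. lra.
  - change (vbar_seq gamma c (S k)) with
      ((1 - / INR (S k)) * vbar_seq gamma c k
           + / INR (S k) * (c + gamma * vbar_seq gamma c k)).
    change (wseq (1 - gamma) (S k)) with
      ((1 - (1 - gamma) / INR (S k)) * wseq (1 - gamma) k).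
    rewrite IH. assert (INR (S k) > 0) by (rewrite S_INR; pose proof (pos_INR k); lra).
    field. lra.
Qed.

Lemma w_bounds (a : R) (k : nat) : 0 < a < 1 -> 0 <= wseq a k <= 1.
Proof.
  intros Ha. induction k as [|k IH].
  - simpl; lra.
  - change (wseq a (S k)) with ((1 - a / INR (S k)) * wseq a k).
    assert (H1 : INR (S k) >= 1) by (rewrite S_INR; pose proof (pos_INR k); lra).
    assert (0 <= a / INR (S k) <= 1).
    { split. apply Rmult_le_pos; [lra| left; apply Rinv_0_lt_compat; lra].
      apply (Rmult_le_reg_r (INR (S k))); [lra|].
      unfold Rdiv; rewrite Rmult_assoc, Rinv_l by lra. lra. }
    split; nra.
Qed.

Lemma floor_nat (k : nat) (x : R) : INR k <= x < INR k + 1 -> rfloor x = Z.of_nat k.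
Proof.
  intros [H1 H2]. unfold rfloor, Int_part.
  rewrite <- (up_tech x (Z.of_nat k)). lia.
  rewrite <- INR_IZR_INZ; lra.
  rewrite plus_IZR, <- INR_IZR_INZ; simpl; lra.
Qed.

Lemma ceil_nat_strict (k : nat) (x : R) : INR k < x < INR k + 1 -> rceil x = Z.of_nat (S k).
Proof.
  intros [H1 H2]. unfold rceil, Int_part.
  rewrite <- (up_tech (- x) (- Z.of_nat (S k))). lia.
  rewrite opp_IZR, <- INR_IZR_INZ, S_INR; lra.
  rewrite plus_IZR, opp_IZR, <- INR_IZR_INZ, S_INR; simpl; lra.
Qed.

Lemma ceil_nat_eq (k : nat) : rceil (INR k) = Z.of_nat k.
Proof.
  unfold rceil, Int_part.
  rewrite <- (up_tech (- INR k) (- Z.of_nat k)). lia.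
  rewrite opp_IZR, <- INR_IZR_INZ; lra.
  rewrite plus_IZR, opp_IZR, <- INR_IZR_INZ; simpl; lra.
Qed.

Lemma vbar_interp (gamma c : R) (k : nat) (x : R) :
  INR k <= x <= INR k + 1 ->
  vbar gamma c x = vbar_seq gamma c k
     + (x - INR k) * (vbar_seq gamma c (S k) - vbar_seq gamma c k).
Proof.
  intros [H1 H2]. unfold vbar.
  destruct (Req_dec x (INR k + 1)) as [E|E].
  - assert (E' : x = INR (S k)) by (rewrite S_INR; lra).
    rewrite E'. rewrite ceil_nat_eq, (floor_nat (S k)).
    rewrite Nat2Z.id, <- INR_IZR_INZ. rewrite E' in E. rewrite E. ring.
    rewrite S_INR; lra.
  - rewrite (floor_nat k x) by lra. rewrite Nat2Z.id, <- INR_IZR_INZ.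
    destruct (Req_dec x (INR k)) as [E2|E2].
    + rewrite E2, ceil_nat_eq, Nat2Z.id. ring.
    + rewrite (ceil_nat_strict k x) by lra. rewrite Nat2Z.id. ring.
Qed.

Lemma dpl_ext f x l l' : l = l' -> derivable_pt_lim f x l -> derivable_pt_lim f x l'.
Proof. intros ->; auto. Qed.

Definition gfun (gamma w K0 x : R) : R :=
  Rpower x (1 - gamma) * (w * (1 - (1 - gamma) * (x - K0) / (K0 + 1)))
  - (1 - gamma) / gamma * Rpower x (1 - gamma - 1).

Lemma gmono (gamma w K0 : R) : 0 < gamma < 1 -> 0 <= w <= 1 -> 0 <= K0 ->
  forall x y, 0 < x -> K0 <= x -> x <= y -> y <= K0 + 1 ->
  gfun gamma w K0 x <= gfun gamma w K0 y.
Proof.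
  intros Hg Hw HK x y Hx H1 H2 H3.
  destruct (Req_dec x y) as [E|E]; [subst; lra|].
  set (a := 1 - gamma).
  set (d := fun t => a * Rpower t (a - 1) * (w * (1 - a * (t - K0) / (K0 + 1)))
       + Rpower t a * (w * (0 - a * (1 - 0) / (K0 + 1)))
       - a / gamma * ((a - 1) * Rpower t (a - 1 - 1))).
  destruct (MVT_cor2 (gfun gamma w K0) d x y) as [t [Ht1 Ht2]]; [lra| |].
  - intros t Ht. unfold gfun, d. fold a.
    apply (derivable_pt_lim_minus
      (fun t => Rpower t a * (w * (1 - a * (t - K0) / (K0 + 1))))
      (fun t => a / gamma * Rpower t (a - 1))).
    + apply (derivable_pt_lim_mult (fun t => Rpower t a)
         (fun t => w * (1 - a * (t - K0) / (K0 + 1)))).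
      * apply derivable_pt_lim_power; lra.
      * apply (derivable_pt_lim_scal (fun t => 1 - a * (t - K0) / (K0 + 1))).
        apply (derivable_pt_lim_minus (fun _ => 1) (fun t => a * (t - K0) / (K0 + 1))).
        -- apply derivable_pt_lim_const.
        -- eapply dpl_ext; [| unfold Rdiv; apply (derivable_pt_lim_mult (fun t => a * (t - K0)) (fun _ => / (K0 + 1)))].
           2:{ apply (derivable_pt_lim_scal (fun t => t - K0)).
               apply (derivable_pt_lim_minus id (fun _ => K0)).
               apply derivable_pt_lim_id. apply derivable_pt_lim_const. }
           2: apply derivable_pt_lim_const.
           field. lra.
    + apply (derivable_pt_lim_scal (fun t => Rpower t (a - 1))).
      apply derivable_pt_lim_power; lra.
  - assert (Hd : d t >= 0).
    { unfold d.
      set (p := Rpower t (a - 1 - 1)).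
      assert (Hp : p > 0) by (unfold p, Rpower; apply exp_pos).
      assert (E1 : Rpower t (a - 1) = p * t).
      { replace (a - 1) with ((a - 1 - 1) + 1) by ring.
        rewrite Rpower_plus, Rpower_1 by lra. reflexivity. }
      assert (E2 : Rpower t a = p * t * t).
      { replace a with ((a - 1 - 1) + 1 + 1) at 1 by ring.
        rewrite !Rpower_plus, Rpower_1 by lra. reflexivity. }
      rewrite E1, E2.
      assert (Ha : 0 < a < 1) by (unfold a; lra).
      assert (HK1 : K0 + 1 > 0) by lra.
      set (K := K0 + 1) in *.
      assert (Hg' : gamma = 1 - a) by (unfold a; ring).
      assert (Hbr : t * (w * (1 - a * (t - K0) / K)) - t * t * w / K + 1 >= 0).
      { assert (B : t * w * (K - a * (t - K0)) - t * t * w + K >= 0).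
        { assert (0 <= t * w) by (apply Rmult_le_pos; lra).
          assert (0 <= t * w * ((1 + a) * (K - t))) by (apply Rmult_le_pos; [lra| nra]).
          assert (a * (t * w) <= a * K).
          { apply Rmult_le_compat_l; [lra|]. 
            assert (t * w <= t * 1) by (apply Rmult_le_compat_l; lra). lra. }
          replace (t * w * (K - a * (t - K0)) - t * t * w + K) with
            (t * w * ((1 + a) * (K - t)) - a * (t * w) + K) by (unfold K; ring).
          assert (a * K <= K) by nra. lra. }
        replace (t * (w * (1 - a * (t - K0) / K)) - t * t * w / K + 1) with
          ((t * w * (K - a * (t - K0)) - t * t * w + K) / K) by (field; lra).
        unfold Rdiv. apply Rle_ge, Rmult_le_pos; [lra| left; apply Rinv_0_lt_compat; lra]. }
      replace (a * (p * t) * (w * (1 - a * (t - K0) / K)) +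
               p * t * t * (w * (0 - a * (1 - 0) / K)) -
               a / gamma * ((a - 1) * p)) with
        (a * p * (t * (w * (1 - a * (t - K0) / K)) - t * t * w / K + 1))
        by (rewrite Hg'; field; lra).
      apply Rle_ge, Rmult_le_pos; [apply Rmult_le_pos; lra| lra]. }
    assert (d t * (y - x) >= 0) by (apply Rle_ge, Rmult_le_pos; lra). lra.
Qed.

Definition Ffun (gamma c x : R) : R :=
  Rpower x (1 - gamma) * (1 - (1 - gamma) / c * vbar gamma c x)
  - (1 - gamma) / gamma * Rpower x (1 - gamma - 1).

Lemma F_int (gamma c : R) (k : nat) (x : R) : 0 < gamma < 1 -> 0 < c ->
  INR k <= x <= INR k + 1 ->
  Ffun gamma c x = gfun gamma (wseq (1 - gamma) k) (INR k) x.
Proof.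
  intros Hg Hc Hx. unfold Ffun, gfun.
  rewrite (vbar_interp gamma c k x Hx), !v_w by lra.
  change (wseq (1 - gamma) (S k)) with
      ((1 - (1 - gamma) / INR (S k)) * wseq (1 - gamma) k).
  rewrite S_INR. pose proof (pos_INR k).
  field. lra.
Qed.

Lemma F_mono (gamma c : R) : 0 < gamma < 1 -> 0 < c ->
  forall N : nat, forall x y, 0 < x -> x <= y -> y <= INR N -> Ffun gamma c x <= Ffun gamma c y.
Proof.
  intros Hg Hc N. induction N as [|N IH]; intros x y Hx Hxy HyN.
  - simpl in HyN. lra.
  - rewrite S_INR in HyN. pose proof (pos_INR N).
    assert (Ha : 0 < 1 - gamma < 1) by lra.
    destruct (Rle_dec y (INR N)) as [Hy|Hy]; [now apply IH|].
    destruct (Rle_dec (INR N) x) as [Hx2|Hx2].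
    + rewrite (F_int gamma c N x), (F_int gamma c N y) by lra.
      apply gmono; try lra. apply w_bounds; lra.
    + apply Rle_trans with (Ffun gamma c (INR N)).
      * apply IH; lra.
      * rewrite (F_int gamma c N (INR N)), (F_int gamma c N y) by lra.
        apply gmono; try lra. apply w_bounds; lra.
Qed.

Theorem theorem6 (gamma c n0 : R) :
  0 < gamma < 1 -> 0 <= c -> 0 < n0 ->
  forall n : R, n0 <= n ->
    vbar gamma c n <=
      c / (1 - gamma) *
      (1 - bconst gamma c n0 * Rpower n (- (1 - gamma))
         - (1 - gamma) / gamma * (1 / n)).
Proof.
  intros Hg Hc Hn0 n Hn.
  destruct (Req_dec c 0) as [E|E].
  - subst c. unfold vbar. rewrite !v_w by lra.
    unfold Rdiv. rewrite !Rmult_0_l. lra.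
  - assert (Hc' : 0 < c) by lra.
    assert (HF : Ffun gamma c n0 <= Ffun gamma c n).
    { destruct (archimed n) as [Hu _].
      assert (Hup : (0 < up n)%Z) by (apply lt_0_IZR; lra).
      apply (F_mono gamma c Hg Hc' (Z.to_nat (up n))); try lra.
      rewrite INR_IZR_INZ, Z2Nat.id by lia. lra. }
    assert (Hnp : 0 < n) by lra.
    assert (P1 : forall x, 0 < x -> Rpower x (1 - gamma - 1) = Rpower x (1 - gamma) / x).
    { intros x Hx. replace (1 - gamma) with ((1 - gamma - 1) + 1) at 2 by ring.
      rewrite Rpower_plus, Rpower_1 by lra. field. lra. }
    assert (Hb : bconst gamma c n0 = Ffun gamma c n0).
    { unfold bconst, Ffun. rewrite P1 by lra. field. lra. }
    rewrite Hb. rewrite Rpower_Ropp.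
    set (q := Rpower n (1 - gamma)).
    assert (Hq : q > 0) by (unfold q, Rpower; apply exp_pos).
    assert (Hv : vbar gamma c n = c / (1 - gamma) * (1 - (1 - (1 - gamma) / c * vbar gamma c n))).
    { field. split; lra. }
    rewrite Hv at 1.
    apply Rmult_le_compat_l.
    { unfold Rdiv. apply Rmult_le_pos; [lra| left; apply Rinv_0_lt_compat; lra]. }
    unfold Ffun in HF. rewrite (P1 n Hnp) in HF. fold q in HF.
    set (W := 1 - (1 - gamma) / c * vbar gamma c n) in *.
    set (B := Ffun gamma c n0) in *.
    assert (HB : B * / q <= W - (1 - gamma) / gamma * (1 / n)).
    { apply (Rmult_le_reg_r q); [lra|].
      replace (B * / q * q) with B by (field; lra).
      replace ((W - (1 - gamma) / gamma * (1 / n)) * q) with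
        (q * W - (1 - gamma) / gamma * (q / n)) by (field; lra).
      unfold B, Ffun; lra. }
    lra.
Qed.
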